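(* There exists a strongly complete profinite group $Q$ (i.e. every subgroup of finite index in $Q$ is open) in which the derived subgroup $Q'$ is not closed.
   Context: $Q'$ denotes the abstract derived subgroup of $Q$, i.e. the subgroup generated algebraically by all commutators $[x,y]$, $x,y\in Q$. *)

(* Defs.v *)
From mathcomp Require Import all_boot all_order all_algebra.
From mathcomp Require Import all_classical all_reals all_analysis.
Set Implicit Arguments. Unset Strict Implicit. Unset Printing Implicit Defensive.
Local Open Scope classical_set_scope.

Section TopGroup.
Variables (T : topologicalType) (mul : T -> T -> T) (inv : T -> T) (one : T).

Definition is_group : Prop :=
  [/\ (forall x y z, mul x (mul y z) = mul (mul x y) z),
      (forall x, mul one x = x), (forall x, mul x one = x),
      (forall x, mul (inv x) x = one) & (forall x, mul x (inv x) = one)].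

Definition is_topological_group : Prop :=
  [/\ is_group, continuous (fun p : T * T => mul p.1 p.2) & continuous inv].

Definition is_profinite_group : Prop :=
  [/\ is_topological_group, compact [set: T], hausdorff_space T
    & totally_disconnected [set: T]].

Definition is_subgroup (H : set T) : Prop :=
  [/\ H one, (forall x y, H x -> H y -> H (mul x y)) & (forall x, H x -> H (inv x))].

Definition lcoset (x : T) (H : set T) : set T := [set mul x h | h in H].

Definition finite_index (H : set T) : Prop :=
  finite_set (range (fun x => lcoset x H)).

Definition strongly_complete : Prop :=
  forall H : set T, is_subgroup H -> finite_index H -> open H.

Definition commutator (x y : T) : T := mul (mul (inv x) (inv y)) (mul x y).

Definition derived_subgroup : set T :=
  \bigcap_(H in [set H | is_subgroup H /\
                   (forall x y, H (commutator x y))]) H.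

End TopGroup.

(* Main.v *)
Set Warnings "-all".
Require Import Defs.
From mathcomp Require Import all_boot all_order all_algebra all_fingroup all_solvable all_field.
From mathcomp Require Import all_classical all_reals all_analysis.
From mathcomp Require Import ring.
Local Open Scope classical_set_scope.
Import GRing.Theory.

Fixpoint pw {A : Type} (mul : A -> A -> A) (one : A) (x : A) (j : nat) : A :=
  if j is j'.+1 then mul (pw mul one x j') x else one.

Section Gen.
Variables (T : topologicalType) (mul : T -> T -> T) (inv : T -> T) (one : T).
Hypothesis hg : is_group mul inv one.

Lemma gA x y z : mul x (mul y z) = mul (mul x y) z. Proof. by case: hg. Qed.
Lemma g1l x : mul one x = x. Proof. by case: hg. Qed.
Lemma g1r x : mul x one = x. Proof. by case: hg. Qed.
Lemma gVl x : mul (inv x) x = one. Proof. by case: hg. Qed.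
Lemma gVr x : mul x (inv x) = one. Proof. by case: hg. Qed.

Lemma gK x y : mul (inv x) (mul x y) = y.
Proof. by rewrite gA gVl g1l. Qed.
Lemma gKV x y : mul x (mul (inv x) y) = y.
Proof. by rewrite gA gVr g1l. Qed.
Lemma gI x y z : mul x y = mul x z -> y = z.
Proof. by move=> h; rewrite -(gK x y) h gK. Qed.
Lemma ginvu x y : mul x y = one -> inv x = y.
Proof. by move=> h; apply: (gI x); rewrite gVr h. Qed.
Lemma ginvK x : inv (inv x) = x.
Proof. by apply: ginvu; rewrite gVl. Qed.
Lemma ginvM x y : inv (mul x y) = mul (inv y) (inv x).
Proof. by apply: ginvu; rewrite -gA (gA y) gVr g1l gVr. Qed.
Lemma ginv1 : inv one = one.
Proof. by apply: ginvu; rewrite g1l. Qed.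

Lemma gcommV x y : inv (Defs.commutator mul inv x y) = Defs.commutator mul inv y x.
Proof. by rewrite /commutator !ginvM !ginvK. Qed.

Lemma pwD x i j : pw mul one x (i + j) = mul (pw mul one x i) (pw mul one x j).
Proof.
elim: j => [|j IH]; first by rewrite addn0 /= g1r.
by rewrite addnS /= IH gA.
Qed.

Lemma pwM x i j : pw mul one x (i * j) = pw mul one (pw mul one x i) j.
Proof.
elim: j => [|j IH]; first by rewrite muln0.
by rewrite mulnS addnC pwD IH.
Qed.

Lemma pw_one j : pw mul one one j = one.
Proof. by elim: j => [|j IH] //=; rewrite IH g1l. Qed.

Lemma subgroup_pw H x j : is_subgroup mul inv one H -> H x -> H (pw mul one x j).
Proof.
case=> H1 HM _ Hx; elim: j => [|j IH] //=; exact: HM.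
Qed.

Inductive pc : nat -> T -> Prop :=
| pc0 : pc 0 one
| pcS r x y z : pc r x -> pc r.+1 (mul x (Defs.commutator mul inv y z)).

Lemma pc_mul r s x w : pc r x -> pc s w -> pc (r + s) (mul x w).
Proof.
move=> hx hw; elim: hw => [|s' w' y z _ IH]; first by rewrite addn0 g1r.
by rewrite addnS gA; apply: pcS.
Qed.

Lemma pc_comm y z : pc 1 (Defs.commutator mul inv y z).
Proof. by rewrite -[Defs.commutator _ _ _ _]g1l; apply: pcS; apply: pc0. Qed.

Lemma pc_inv r x : pc r x -> pc r (inv x).
Proof.
elim=> [|r' x' y z _ IH]; first by rewrite ginv1; apply: pc0.
rewrite ginvM gcommV -add1n; apply: pc_mul => //; exact: pc_comm.
Qed.

Lemma derived_pc x : derived_subgroup mul inv one x -> exists r, pc r x.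
Proof.
move=> hx; apply: (hx (fun x => exists r, pc r x)); split; last first.
  by move=> y z; exists 1%N; apply: pc_comm.
split.
- by exists 0%N; apply: pc0.
- by move=> a b [r ha] [s hb]; exists (r + s)%N; apply: pc_mul.
- by move=> a [r ha]; exists r; apply: pc_inv.
Qed.

End Gen.
Section Coord.
Variables (p m : nat).
Local Notation F := 'F_p.
Definition Gt := ('rV[F]_m * 'rV[F]_m * 'M[F]_m)%type.
Definition gmul (x y : Gt) : Gt :=
  (x.1.1 + y.1.1, x.1.2 + y.1.2, x.2 + y.2 + (x.1.1)^T *m y.1.2)%R.
Definition ginv (x : Gt) : Gt :=
  (- x.1.1, - x.1.2, - x.2 + (x.1.1)^T *m x.1.2)%R.
Definition gone : Gt := (0, 0, 0)%R.
Definition K : topologicalType := discrete_topology Gt.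

Ltac mxring := apply/matrixP => i j; rewrite !mxE ?big_ord1 ?mxE ?big_ord1 ?mxE; ring.

Lemma Gt_group : is_group (T:=K) gmul ginv gone.
Proof.
split.
- move=> [[a b] c] [[a' b'] c'] [[a'' b''] c'']; rewrite /gmul /=.
  congr (_, _, _); rewrite ?addrA //.
  apply/matrixP => i j; rewrite !mxE !big_ord1 !mxE. ring.
- move=> [[a b] c]; rewrite /gmul /=; congr (_, _, _); rewrite ?add0r //.
  apply/matrixP => i j; rewrite !mxE !big_ord1 !mxE. ring.
- move=> [[a b] c]; rewrite /gmul /=; congr (_, _, _); rewrite ?addr0 //.
  apply/matrixP => i j; rewrite !mxE !big_ord1 !mxE. ring.
- move=> [[a b] c]; rewrite /gmul /ginv /=; congr (_, _, _); rewrite ?addNr //.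
  apply/matrixP => i j; rewrite !mxE !big_ord1 !mxE. ring.
- move=> [[a b] c]; rewrite /gmul /ginv /=; congr (_, _, _); rewrite ?addrN //.
  apply/matrixP => i j; rewrite !mxE !big_ord1 !mxE. ring.
Qed.

Lemma gcommE (x y : Gt) : @Defs.commutator K gmul ginv x y =
  (0, 0, (x.1.1)^T *m y.1.2 - (y.1.1)^T *m x.1.2)%R.
Proof.
case: x => [[a b] c]; case: y => [[a' b'] c'].
rewrite /Defs.commutator /gmul /ginv /=; congr (_, _, _).
- by apply/matrixP => i j; rewrite !mxE; ring.
- by apply/matrixP => i j; rewrite !mxE; ring.
apply/matrixP => i j; rewrite !mxE !big_ord1 !mxE. ring.
Qed.

Lemma gpw_shape (x : Gt) j : exists D,
  pw gmul gone x j = (x.1.1 *+ j, x.1.2 *+ j, D)%R.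
Proof.
elim: j => [|j [D IH]]; first by exists 0%R.
rewrite /= IH /gmul /=; eexists; rewrite !mulrSr; reflexivity.
Qed.

Lemma gpw_center (D : 'M[F]_m) j :
  pw gmul gone (0, 0, D)%R j = (0, 0, D *+ j)%R.
Proof.
elim: j => [|j IH] //=; rewrite IH /gmul /= !addr0 mulrSr.
by rewrite trmx0 mul0mx addr0.
Qed.

Lemma gpw_pp (x : Gt) : prime p -> pw gmul gone x (p * p) = gone.
Proof.
move=> pp.
have z : forall (w : 'M[F]_(1, m)), (w *+ p)%R = 0%R.
  by move=> w; rewrite -scaler_nat pchar_Fp_0 // scale0r.
rewrite (@pwM _ _ _ _ Gt_group); have [D ->] := gpw_shape x p.
rewrite !z gpw_center.
by rewrite -scaler_nat pchar_Fp_0 // scale0r.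
Qed.

Lemma pc_rank r (x : Gt) : @pc K gmul ginv gone r x ->
  [/\ x.1.1 = 0%R, x.1.2 = 0%R & (\rank x.2 <= r.*2)%N].
Proof.
elim=> [|r' x' y z _ [h1 h2 h3]]; first by rewrite /= mxrank0.
rewrite gcommE; case: x' h1 h2 h3 => [[a b] c] /= -> -> h3.
split; rewrite ?addr0 //.
rewrite trmx0 mul0mx addr0 doubleS.
set E := (_ - _)%R.
have hE : (\rank E <= 2)%N.
  apply: (leq_trans (mxrank_add _ _)).
  by rewrite mxrank_opp; apply: leq_trans (leq_add (mulmx_max_rank _ _) (mulmx_max_rank _ _)) _.
apply: leq_trans (mxrank_add _ _) _; apply: leq_trans (leq_add h3 hE) _.
by rewrite addn2.
Qed.

End Coord.
Definition P (n : nat) := pdiv (n`!.+1).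
Definition Mdim (n : nat) := (n.*2).+1.

Lemma P_prime n : prime (P n).
Proof. by apply: pdiv_prime; rewrite ltnS fact_gt0. Qed.

Lemma notdvd_fact p k : prime p -> (k < p)%N -> ~~ (p %| k`!)%N.
Proof.
move=> pp; elim: k => [|k IH] hk.
  by rewrite fact0 dvdn1; apply/eqP => e; rewrite e in pp.
rewrite factS Euclid_dvdM // negb_or IH ?(ltnW hk) // andbT.
apply/negP => /(dvdn_leq (ltn0Sn _)); rewrite leqNgt hk.
by [].
Qed.

Lemma P_gt n : (n < P n)%N.
Proof.
rewrite ltnNge; apply/negP => h.
have hd : (P n %| n`!)%N by apply: dvdn_fact; rewrite h andbT prime_gt0 // P_prime.
have : (P n %| n`!.+1)%N by apply: pdiv_dvd.
rewrite -addn1 dvdn_addr // dvdn1 => /eqP e.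
by have := P_prime n; rewrite e.
Qed.
Definition KK n : topologicalType := K (P n) (Mdim n).
Definition TT : topologicalType := prod_topology KK.

Lemma nbhs_coord (x : TT) n : nbhs x [set f : TT | f n = x n].
Proof.
have := @proj_continuous nat KK n x.
move=> h; apply: (proj1 (@discrete_cvg (discrete_topology (Gt (P n) (Mdim n))) _ _ _)) h. apply: fmap_filter; exact: (@nbhs_filter TT).
Qed.

Lemma cont_into (X : topologicalType) (f : X -> TT) :
  (forall n, continuous (fun x => f x n)) -> continuous f.
Proof.
move=> h x; apply/cvg_sup => i.
have := @continuous_comp_initial _ X (KK i) (fun g : TT => g i) f (h i).
exact.
Qed.

Arguments gmul {p m}.
Arguments ginv {p m}.
Definition tmul (f g : TT) : TT := fun n => gmul (f n) (g n).
Definition tinv (f : TT) : TT := fun n => ginv (f n).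
Definition tone : TT := fun n => gone (P n) (Mdim n).

Lemma TT_group : is_group tmul tinv tone.
Proof.
split=> *; apply: functional_extensionality_dep => n;
  have [h1 h2 h3 h4 h5] := Gt_group (P n) (Mdim n); rewrite /tmul /tinv /tone.
- exact: h1.
- exact: h2.
- exact: h3.
- exact: h4.
- exact: h5.
Qed.

Lemma nbhs_pair (x y : TT) n :
  nbhs (x, y) [set q : TT * TT | q.1 n = x n /\ q.2 n = y n].
Proof.
exists ([set f : TT | f n = x n], [set f : TT | f n = y n]).
  by split; apply: nbhs_coord.
by move=> [a b] [/= -> ->].
Qed.

Lemma tmul_cont : continuous (fun q : TT * TT => tmul q.1 q.2).
Proof.
apply: cont_into => n q.
apply: (proj2 (@discrete_cvg (discrete_topology (Gt (P n) (Mdim n))) _ _ _)).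
apply: filterS (nbhs_pair q.1 q.2 n).
by move=> [a b] [/= h1 h2]; rewrite /tmul /= h1 h2.
Qed.

Lemma tinv_cont : continuous tinv.
Proof.
apply: cont_into => n q.
apply: (proj2 (@discrete_cvg (discrete_topology (Gt (P n) (Mdim n))) _ _ _)).
  apply: fmap_filter; exact: (@nbhs_filter TT).
apply: filterS (nbhs_coord q n).
by move=> a /= h; rewrite /tinv h.
Qed.

Lemma TT_compact : compact [set: TT].
Proof.
have fc : forall n, compact [set: KK n].
  move=> n; apply: finite_compact; exact: (@finite_finset (Gt (P n) (Mdim n)) setT).
have := @tychonoff nat KK (fun _ => setT) fc.
by congr (compact _); rewrite eqEsubset.
Qed.

Lemma TT_hausdorff : hausdorff_space TT.
Proof.
apply: (@hausdorff_product nat KK) => n.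
exact: (@discrete_hausdorff (discrete_topology (Gt (P n) (Mdim n)))).
Qed.

Lemma TT_td : totally_disconnected [set: TT].
Proof.
have := @totally_disconnected_prod nat KK (fun _ => setT) (fun n =>
  @zero_dimension_totally_disconnected _
   (@discrete_zero_dimension (discrete_topology (Gt (P n) (Mdim n))))).
have e : (fun f : TT => forall i, [set: KK i] (f i)) = [set: TT] by rewrite eqEsubset.
by rewrite -e; exact.
Qed.

Lemma pw_coord x j n : pw tmul tone x j n = pw gmul (gone (P n) (Mdim n)) (x n) j.
Proof. by elim: j => [|j IH] //=; rewrite /tmul IH. Qed.

Lemma pc_coord r x : @pc TT tmul tinv tone r x ->
  forall n, @pc (KK n) gmul ginv (gone (P n) (Mdim n)) r (x n).
Proof.
elim=> [|r' x' y w _ IH] n; first exact: pc0.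
exact: (@pcS (KK n) gmul ginv (gone (P n) (Mdim n)) r' (x' n) (y n) (w n) (IH n)).
Qed.

Definition zz : TT := fun n => (0, 0, 1%:M)%R : Gt (P n) (Mdim n).

Lemma zz_notin : ~ derived_subgroup tmul tinv tone zz.
Proof.
move/(@derived_pc _ _ _ _ TT_group) => [r hr].
have [_ _] := @pc_rank (P r) (Mdim r) r (zz r) (pc_coord _ _ hr r).
by rewrite /zz /= mxrank1 /Mdim ltnn.
Qed.

Arguments gA {T mul inv one}. Arguments g1l {T mul inv one}. Arguments g1r {T mul inv one}.
Arguments gVl {T mul inv one}. Arguments gVr {T mul inv one}. Arguments gK {T mul inv one}.
Arguments gKV {T mul inv one}. Arguments gI {T mul inv one}. Arguments ginv1 {T mul inv one}.
Arguments ginvM {T mul inv one}. Arguments ginvK {T mul inv one}.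
Arguments pwD {T mul inv one}. Arguments pwM {T mul inv one}. Arguments pw_one {T mul inv one}.

Definition single n (v : KK n) : TT := dfwith tone n v.

Definition gl n := Gt_group (P n) (Mdim n).

Lemma single_mul n (u v : KK n) : single n (gmul u v) = tmul (single n u) (single n v).
Proof.
apply: functional_extensionality_dep => i; rewrite /tmul /single.
have [<-|ne] := eqVneq n i; first by rewrite !dfwithin.
by rewrite !dfwithout // /tone (g1l (gl i)).
Qed.

Lemma single_one n : single n (gone (P n) (Mdim n)) = tone.
Proof.
apply: functional_extensionality_dep => i; rewrite /single.
have [<-|ne] := eqVneq n i; first by rewrite !dfwithin.
by rewrite !dfwithout.
Qed.

Lemma single_inv n (u : KK n) : single n (ginv u) = tinv (single n u).
Proof.
apply: functional_extensionality_dep => i; rewrite /tinv /single.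
have [<-|ne] := eqVneq n i; first by rewrite !dfwithin.
by rewrite !dfwithout // /tone (ginv1 (gl i)).
Qed.

Lemma single_comm n (u v : KK n) :
  single n (@Defs.commutator (KK n) gmul ginv u v) = Defs.commutator tmul tinv (single n u) (single n v).
Proof. by rewrite /Defs.commutator !single_mul !single_inv. Qed.

Section Closure.
Variable H : set TT.
Hypothesis Hs : is_subgroup tmul tinv tone H.
Hypothesis Hc : forall x y, H (Defs.commutator tmul tinv x y).

Lemma sum_outer m (F : fieldType) (D : 'M[F]_m) :
  D = (\sum_(j < m) (delta_mx 0 j : 'rV[F]_m)^T *m row j D)%R.
Proof.
apply/matrixP => a b; rewrite summxE (bigD1 a) //= big1 => [|j ne].
  by rewrite !mxE big_ord1 !mxE !eqxx /= mul1r addr0.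
by rewrite !mxE big_ord1 !mxE (eq_sym a j) (negbTE ne) andbF mul0r.
Qed.
Lemma good_all n (D : 'M['F_(P n)]_(Mdim n)) : H (single n ((0, 0, D)%R : KK n)).
Proof.
case: Hs => H1 HM HV.
rewrite (@sum_outer _ _ D).
apply: (big_ind (fun X => H (single n ((0, 0, X)%R : KK n)))).
- by rewrite (single_one n).
- move=> A B hA hB.
  have -> : ((0, 0, A + B)%R : KK n) = gmul ((0, 0, A)%R : KK n) (0, 0, B)%R.
    by rewrite /gmul /= addr0 trmx0 mul0mx addr0.
  by rewrite single_mul; apply: HM.
- move=> j _.
  have -> : ((0, 0, (delta_mx 0 j)^T *m row j D)%R : KK n) =
     @Defs.commutator (KK n) gmul ginv (delta_mx 0 j, 0, 0)%R (0, row j D, 0)%R.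
    by rewrite gcommE /= trmx0 mul0mx subr0.
  by rewrite single_comm; apply: Hc.
Qed.

End Closure.

Definition trunc N : TT := fun i => if (i < N)%N then zz i else tone i.

Lemma trunc_derived N : derived_subgroup tmul tinv tone (trunc N).
Proof.
move=> H [Hs Hc]; have [H1 HM HV] := Hs.
elim: N => [|N IH].
  have -> : trunc 0 = tone by apply: functional_extensionality_dep.
  exact: H1.
have -> : trunc N.+1 = tmul (trunc N) (single N (zz N)).
  apply: functional_extensionality_dep => i; rewrite /tmul /single /trunc.
  case: (ltngtP i N) => [lt|gt|->].
  - rewrite ltnS (ltnW lt) dfwithout; last by rewrite neq_ltn lt orbT.
    by rewrite /tone (g1r (gl i)).
  - rewrite ltnS leqNgt gt /= dfwithout; last by rewrite neq_ltn gt.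
    by rewrite /tone (g1l (gl i)).
  - by rewrite ltnS leqnn dfwithin /tone (g1l (gl N)).
apply: HM => //; exact: (@good_all H Hs Hc N 1%:M%R).
Qed.

Lemma zz_closure : closure (derived_subgroup tmul tinv tone) zz.
Proof.
have gcvg : trunc @ \oo --> zz.
  apply/cvg_sup => N U [V] [[W] oW <-] WfN WU.
  by apply: (filterS WU); rewrite nbhs_simpl /trunc; exists N.+1 => // i /= ->.
move=> B /gcvg; rewrite nbhs_simpl => -[N0 _ hN].
exists (trunc N0); split; first exact: trunc_derived.
exact: (hN N0 (leqnn N0)).
Qed.

Section Strong.
Variable H : set TT.
Hypothesis Hs : is_subgroup tmul tinv tone H.
Hypothesis Hf : finite_index tmul H.

Lemma bounded_pow : exists k, forall y, exists d, (0 < d <= k)%N /\ H (pw tmul tone y d).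
Proof.
have [H1 HM HV] := Hs.
have [k hk] := (finite_set_leP _).1 Hf.
exists k => y; apply: contrapT => nex.
pose f j := Defs.lcoset tmul (pw tmul tone y j) H.
have finj : {in `I_k.+1 &, injective f}.
  have key i j : (i < j)%N -> (j < k.+1)%N -> f i = f j -> False.
    move=> ij jk e.
    have : f i (pw tmul tone y j).
      by rewrite e; exists tone => //; rewrite (g1r TT_group).
    case=> h Hh eh.
    apply: nex; exists (j - i)%N; split.
      by rewrite subn_gt0 ij /= leq_subLR -ltnS (leq_trans jk) // ltnS leq_addl.
    move: eh; rewrite -{1}(subnKC (ltnW ij)) (pwD TT_group) => /(gI TT_group) <-.
    exact: Hh.
  move=> i j; rewrite !in_setE /= => hi hj e.
  case: (ltngtP i j) => [ij|ji|//].
  - by case: (key _ _ ij hj e).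
  - by case: (key _ _ ji hi (esym e)).
have h1 : (`I_k.+1 #<= range (fun x => Defs.lcoset tmul x H))%card.
  rewrite -(card_le_eql (inj_card_eq finj)); apply: subset_card_le.
  by move=> _ [j _ <-]; exists (pw tmul tone y j).
have := card_le_trans h1 hk.
by rewrite card_le_II ltnn.
Qed.

Lemma fact_pow : exists k, forall y, H (pw tmul tone y k`!).
Proof.
have [k hk] := bounded_pow; exists k => y.
have [d [hd Hd]] := hk y.
have dd : (d %| k`!)%N by apply: dvdn_fact.
by rewrite -(divnK dd) mulnC (pwM TT_group); exact: (@subgroup_pw TT tmul tinv tone H _ _ Hs Hd).
Qed.

Lemma small_in : exists k, forall g : TT, (forall n, (n <= k)%N -> g n = tone n) -> H g.
Proof.
have [k hk] := fact_pow; exists k => g hg.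
set N := k`!.
pose y : TT := fun n => if (n <= k)%N then tone n
  else pw gmul (gone (P n) (Mdim n)) (g n) (N ^ (totient (P n * P n)).-1).
suff <- : pw tmul tone y N = g by apply: hk.
apply: functional_extensionality_dep => n; rewrite pw_coord /y.
case: ifP => nk; first by rewrite (hg _ nk) (pw_one (gl n)).
have pp := P_prime n.
have kn : (k < P n)%N by apply: (ltn_trans _ (P_gt n)); rewrite ltnNge nk.
have cop : coprime N (P n * P n).
  by rewrite coprimeMr andbb coprime_sym prime_coprime // notdvd_fact.
rewrite -(pwM (gl n)) -expnSr prednK ?totient_gt0 ?muln_gt0 ?prime_gt0 //.
have e := Euler_exp_totient cop.
rewrite (divn_eq (N ^ _) (P n * P n)) e modn_small; last first.
  by rewrite (@ltn_mul 1 1) // prime_gt1.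
rewrite (pwD (gl n)) mulnC (pwM (gl n)) gpw_pp // (pw_one (gl n)) (g1l (gl n)) /=.
exact: (g1l (gl n)).
Qed.

Lemma open_sub : open H.
Proof.
have [H1 HM HV] := Hs.
have [k hk] := small_in.
rewrite openE => x Hx.
have V : nbhs x [set f : TT | forall n, (n <= k)%N -> f n = x n].
  clear hk; elim: k => [|k IH].
    by apply: filterS (nbhs_coord x 0) => f h n; rewrite leqn0 => /eqP ->.
  apply: filterS (filterI IH (nbhs_coord x k.+1)) => f [h1 h2] n.
  by rewrite leq_eqVlt ltnS => /orP [/eqP -> //|]; exact: h1.
apply: filterS V => f hf.
have -> : f = tmul x (tmul (tinv x) f) by rewrite (gKV TT_group).
apply: HM Hx _; apply: hk => n nk.
by rewrite /tmul /tinv hf // (gVl (gl n)).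
Qed.

End Strong.

Theorem proposition1 :
  exists (T : topologicalType) (mul : T -> T -> T) (inv : T -> T) (one : T),
    [/\ is_profinite_group mul inv one,
        strongly_complete mul inv one
      & ~ closed (derived_subgroup mul inv one)].
Proof.
exists TT, tmul, tinv, tone; split.
- split; [split; [exact: TT_group | exact: tmul_cont | exact: tinv_cont]
         | exact: TT_compact | exact: TT_hausdorff | exact: TT_td].
- by move=> H Hs Hf; exact: open_sub.
- by move=> cl; apply: zz_notin; apply: cl; exact: zz_closure.
Qed.
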